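(* Let $K$ be a Markov kernel from $(\mathbb{R}^d,\mathcal{B}(\mathbb{R}^d))$ to $(\mathbb{R}^{2d},\mathcal{B}(\mathbb{R}^{2d}))$, let $\alpha:\mathbb{R}^d\times\mathbb{R}^{2d}\to[0,1]$ be Borel measurable, and let $P$ be the Markov kernel on $\mathbb{R}^d$ given by $$P(q,A)=\int 1_A(\mathrm{proj}(z))\alpha(q,z)K(q,dz)+\delta_q(A)\int\{1-\alpha(q,z)\}K(q,dz).$$ Let $V:\mathbb{R}^d\to[1,\infty)$ be measurable, extended to $\mathbb{R}^{2d}$ by $V(q,p)=V(q)$, and for $q\in\mathbb{R}^d$ let $\mathscr R(q)=\{z\in\mathbb{R}^{2d}:\alpha(q,z)<1\}$ and $\mathscr B(q)=\{z\in\mathbb{R}^{2d}:V(\mathrm{proj}(z))\le V(q)\}$. Assume there exist $\lambda\in[0,1)$ and $b\ge0$ such that $KV\le\lambda V+b$ and $$\lim_{M\to\infty}\sup_{\{q:V(q)\ge M\}}K(q,\mathscr R(q)\cap\mathscr B(q))=0.$$ Then there exist $\tilde\lambda\in[0,1)$ and $\tilde b\ge0$ such that $PV\le\tilde\lambda V+\tilde b$.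
   Context: $\mathrm{proj}:\mathbb{R}^d\times\mathbb{R}^d\to\mathbb{R}^d$ is the projection onto the first $d$ coordinates. $KV(q)=\int V(z)K(q,dz)$. *)

(* Defs.v *)
From HB Require Import structures.
From mathcomp Require Import all_boot all_order all_algebra.
From mathcomp Require Import all_classical all_reals all_analysis.
Set Implicit Arguments. Unset Strict Implicit. Unset Printing Implicit Defensive.
Import Order.TTheory GRing.Theory Num.Theory.
Local Open Scope classical_set_scope.
Local Open Scope ring_scope.
Local Open Scope ereal_scope.

(* R^n is modelled as n.-tuple R with the product sigma-algebra of Borel sets
   (= Borel sigma-algebra of R^n); R^{2n} = R^n * R^n with the product
   sigma-algebra (= Borel sigma-algebra of R^{2n}); proj = fst. *)
Notation Rn R n := (n.-tuple (R : realType)).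

Definition P_formula (R : realType) (n : nat)
  (K : R.-pker Rn R n ~> (Rn R n * Rn R n)%type)
  (alpha : Rn R n -> (Rn R n * Rn R n)%type -> R)
  (q : Rn R n) (A : set (Rn R n)) : \bar R :=
  \int[K q]_z ((\1_A z.1 : R) * alpha q z)%:E
  + \d_q A * \int[K q]_z (1 - alpha q z)%:E.

Definition rej_set (R : realType) (n : nat)
  (alpha : Rn R n -> (Rn R n * Rn R n)%type -> R) (q : Rn R n)
  : set (Rn R n * Rn R n) := [set z | (alpha q z < 1)%R].

Definition below_set (R : realType) (n : nat) (V : Rn R n -> R) (q : Rn R n)
  : set (Rn R n * Rn R n) := [set z | (V z.1 <= V q)%R].

(* Main.v *)
Require Import Defs.
From HB Require Import structures.
From mathcomp Require Import all_boot all_order all_algebra.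
From mathcomp Require Import all_classical all_reals all_analysis.
From mathcomp Require Import measurable_realfun.
From mathcomp Require Import lra.
Import Order.TTheory GRing.Theory Num.Theory.
Local Open Scope classical_set_scope.
Local Open Scope ring_scope.
Local Open Scope ereal_scope.

Section kk.
Context (R : realType) (n : nat) (alpha : Rn R n -> (Rn R n * Rn R n)%type -> R).
Hypothesis malpha : measurable_fun [set: (Rn R n * (Rn R n * Rn R n))%type]
    (fun w => alpha w.1 w.2).
Hypothesis alpha01 : forall q z, (0 <= alpha q z <= 1)%R.

Lemma a_ge0 (w : (Rn R n * (Rn R n * Rn R n))%type) : (0 <= alpha w.1 w.2)%R.
Proof. by case/andP: (alpha01 w.1 w.2). Qed.
Lemma a1_ge0 (w : (Rn R n * (Rn R n * Rn R n))%type) : (0 <= 1 - alpha w.1 w.2)%R.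
Proof. by case/andP: (alpha01 w.1 w.2) => _; rewrite subr_ge0. Qed.

Definition kk (w : (Rn R n * (Rn R n * Rn R n))%type) : {measure set (Rn R n) -> \bar R} :=
  measure_add (mscale (NngNum (a_ge0 w)) (\d_(w.2.1)))
              (mscale (NngNum (a1_ge0 w)) (\d_(w.1))).

Lemma kkE w U : kk w U =
  ((alpha w.1 w.2) * \1_U w.2.1 + (1 - alpha w.1 w.2) * \1_U w.1)%:E.
Proof. by rewrite [LHS]measure_addE EFinD !EFinM. Qed.

Lemma kk_meas U : measurable U -> measurable_fun [set: (Rn R n * (Rn R n * Rn R n))%type] (fun w => kk w U).
Proof.
move=> mU.
have -> : (fun w => kk w U) = (fun w => ((alpha w.1 w.2) * \1_U w.2.1 + (1 - alpha w.1 w.2) * \1_U w.1)%:E) :> (_ -> \bar R).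
  by apply/funext => w; rewrite kkE.
apply/measurable_EFinP; apply: measurable_funD; apply: measurable_funM => //.
- apply: measurableT_comp; first exact: measurable_indic.
  by apply: measurableT_comp => //.
- by apply: measurable_funB => //.
- apply: measurableT_comp; first exact: measurable_indic.
  by [].
Qed.

HB.instance Definition _ := isKernel.Build _ _ _ _ R kk kk_meas.

Lemma kk_prob w : kk w [set: Rn R n] = 1.
Proof. by rewrite kkE !indicE !in_setT /= !mulr1 addrC subrK. Qed.

HB.instance Definition _ := Kernel_isProbability.Build _ _ _ _ _ kk kk_prob.


Variables (K : R.-pker Rn R n ~> (Rn R n * Rn R n)%type)
  (P : Rn R n -> {measure set (Rn R n) -> \bar R}) (V : Rn R n -> R).
Hypothesis HP : forall q A, measurable A -> P q A = P_formula K alpha q A.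
Hypothesis mV : measurable_fun [set: Rn R n] V.
Hypothesis V1 : forall q, (1 <= V q)%R.

Lemma malq q : measurable_fun [set: (Rn R n * Rn R n)%type] (fun z => alpha q z).
Proof. exact: (measurableT_comp malpha (pair1_measurable q)). Qed.

Lemma mS q : measurable (rej_set alpha q `&` below_set V q).
Proof.
apply: measurableI.
  have H := measurable_fun_ltr (malq q) (measurable_cst (1%R : R)).
  by have := H measurableT [set true] I; rewrite setTI.
have mV1 : measurable_fun [set: (Rn R n * Rn R n)%type] (fun z : (Rn R n * Rn R n)%type => V z.1).
  exact: measurableT_comp mV measurable_fst.
have H := measurable_fun_ler mV1 (measurable_cst (V q)).
by have := H measurableT [set true] I; rewrite setTI.
Qed.

Lemma step1 q : \int[P q]_x (V x)%:E = \int[kcomp K kk q]_x (V x)%:E.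
Proof.
apply: eq_measure_integral => A mA _.
rewrite HP // /P_formula /kcomp.
under [RHS]eq_integral => z _ do rewrite kkE /= EFinD.
rewrite ge0_integralD //; last 4 first.
- by move=> z _; rewrite lee_fin mulr_ge0 ?indic_ge0 //; case/andP: (alpha01 q z).
- apply/measurable_EFinP; apply: measurable_funM; first exact: malq.
  apply: measurableT_comp; first exact: measurable_indic.
  exact: measurable_fst.
- by move=> z _; rewrite lee_fin mulr_ge0 ?indic_ge0 //; case/andP: (alpha01 q z) => _; rewrite subr_ge0.
- apply/measurable_EFinP; apply: measurable_funM => //.
  by apply: measurable_funB => //; exact: malq.
congr (_ + _).
  by apply: eq_integral => z _; rewrite mulrC.
under [RHS]eq_integral do rewrite EFinM.
rewrite ge0_integralZr //; last 2 first.
- by apply/measurable_EFinP; apply: measurable_funB => //; exact: malq.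
- by move=> z _; rewrite lee_fin; case/andP: (alpha01 q z) => _; rewrite subr_ge0.
by rewrite muleC.
Qed.


Lemma mVE : measurable_fun [set: Rn R n] (fun x => (V x)%:E).
Proof. exact/measurable_EFinP. Qed.

Lemma mV1 : measurable_fun [set: (Rn R n * Rn R n)%type] (fun z : (Rn R n * Rn R n)%type => V z.1).
Proof. exact: measurableT_comp mV measurable_fst. Qed.

Lemma step2 q : \int[kcomp K kk q]_x (V x)%:E =
  \int[K q]_z ((alpha q z) * V z.1 + (1 - alpha q z) * V q)%:E.
Proof.
rewrite integral_kcomp //; last 2 first.
- by move=> x; rewrite lee_fin (le_trans ler01 (V1 x)).
- exact: mVE.
apply: eq_integral => z _.
rewrite /kk ge0_integral_measure_add //; last 2 first.
- by move=> x _; rewrite lee_fin (le_trans ler01 (V1 x)).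
- exact: mVE.
rewrite !ge0_integral_mscale //; last 4 first.
- exact: mVE.
- by move=> x _; rewrite lee_fin (le_trans ler01 (V1 x)).
- exact: mVE.
- by move=> x _; rewrite lee_fin (le_trans ler01 (V1 x)).
rewrite !integral_dirac //; try exact: mVE.
by rewrite !diracT !mul1e /= -!EFinM -EFinD.
Qed.

Lemma step3 q :
  \int[K q]_z ((alpha q z) * V z.1 + (1 - alpha q z) * V q)%:E <=
  \int[K q]_z (V z.1)%:E + (V q)%:E * K q (rej_set alpha q `&` below_set V q).
Proof.
set S := rej_set alpha q `&` below_set V q.
apply: (@le_trans _ _ (\int[K q]_z (V z.1 + V q * \1_S z)%:E)).
  apply: ge0_le_integral => //.
  - move=> z _; rewrite lee_fin; case/andP: (alpha01 q z) => a0 a1.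
    have := V1 z.1; have := V1 q; nra.
  - apply/measurable_EFinP; apply: measurable_funD; apply: measurable_funM => //.
    + exact: malq.
    + exact: mV1.
    + by apply: measurable_funB => //; exact: malq.
  - apply/measurable_EFinP; apply: measurable_funD; first exact: mV1.
    apply: measurable_funM => //; apply: measurable_indic; exact: mS.
  - move=> z _; rewrite lee_fin; case/andP: (alpha01 q z) => a0 a1.
    have v1 := V1 z.1; have vq := V1 q.
    rewrite indicE; case: (boolP (z \in S)) => [_|].
      rewrite mulr1; nra.
    rewrite mulr0 addr0 notin_setE /S /rej_set /below_set /= => /not_andP [].
      move=> /negP; rewrite -leNgt => a1'.
      have -> : alpha q z = 1%R by apply/eqP; rewrite eq_le a1 a1'.
      by rewrite subrr mul0r addr0 mul1r.
    move=> /negP; rewrite -ltNge => lt.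
    nra.
rewrite (_ : (fun z => _) = (fun z => (V z.1)%:E + (V q)%:E * (\1_S z)%:E)); last first.
  by apply/funext => z; rewrite EFinD EFinM.
rewrite ge0_integralD //; last 4 first.
- by move=> z _; rewrite lee_fin (le_trans ler01 (V1 _)).
- by apply/measurable_EFinP; exact: mV1.
- by move=> z _; rewrite mule_ge0 // lee_fin ?indic_ge0 // (le_trans ler01 (V1 _)).
- apply: emeasurable_funM => //; apply/measurable_EFinP; apply: measurable_indic; exact: mS.
rewrite ge0_integralZl //; last 2 first.
- apply/measurable_EFinP; apply: measurable_indic; exact: mS.
- by rewrite lee_fin (le_trans ler01 (V1 _)).
by rewrite integral_indic ?setIT //; exact: mS.
Qed.


Lemma PV_le q : \int[P q]_x (V x)%:E <=
  \int[K q]_z (V z.1)%:E + (V q)%:E * K q (rej_set alpha q `&` below_set V q).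
Proof. by rewrite step1 step2; exact: step3. Qed.

End kk.

Theorem proposition5 (R : realType) (n : nat)
  (K : R.-pker Rn R n ~> (Rn R n * Rn R n)%type)
  (alpha : Rn R n -> (Rn R n * Rn R n)%type -> R)
  (P : Rn R n -> {measure set (Rn R n) -> \bar R})
  (V : Rn R n -> R) (lam b : R) :
  measurable_fun [set: (Rn R n * (Rn R n * Rn R n))%type]
    (fun w => alpha w.1 w.2) ->
  (forall q z, (0 <= alpha q z <= 1)%R) ->
  (forall q A, measurable A -> P q A = P_formula K alpha q A) ->
  measurable_fun [set: Rn R n] V ->
  (forall q, (1 <= V q)%R) ->
  (0 <= lam < 1)%R -> (0 <= b)%R ->
  (forall q, \int[K q]_z (V z.1)%:E <= (lam * V q + b)%:E) ->
  (fun M : R => ereal_sup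
     ([set K q (rej_set alpha q `&` below_set V q) | q in [set q | (M <= V q)%R]]
      `|` [set 0])) @ +oo%R --> 0 ->
  exists lam' b' : R, (0 <= lam' < 1)%R /\ (0 <= b')%R /\
    forall q, \int[P q]_x (V x)%:E <= (lam' * V q + b')%:E.
Proof.
move=> malpha a01 HP mV V1 /andP[l0 l1] b0 HKV Hlim.
pose eps := ((1 - lam) / 2)%R.
have eps0 : (0 < eps)%R by rewrite /eps divr_gt0 // subr_gt0.
have hnb : nbhs (0%R%:E : \bar R) [set y | y < eps%:E].
  apply/nbhs_EFin; near=> x; rewrite /= lte_fin; near: x; exact: (num_topology.nbhs0_lt eps0).
have [M0 [M0r HM0]] := Hlim _ hnb.
pose M := (Num.max (M0 + 1) 1)%R.
have M0M : (M0 < M)%R by rewrite /M lt_max ltrDl ltr01.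
have M1 : (1 <= M)%R by rewrite /M le_max lexx orbT.
exists (lam + eps)%R, (b + M)%R; split; [|split].
- apply/andP; split; first by rewrite addr_ge0 // ltW.
  rewrite /eps; lra.
- by rewrite addr_ge0 // (le_trans ler01 M1).
move=> q.
set S := rej_set alpha q `&` below_set V q.
have mSq : measurable S by exact: mS.
have KS0 : 0 <= K q S by [].
have KS1 : K q S <= 1.
  by rewrite -(@prob_kernel _ _ _ _ _ K q); apply: le_measure => //; rewrite inE.
have KSf : K q S \is a fin_num by rewrite ge0_fin_numE // (le_lt_trans KS1) // ltey.
have KSE := fineK KSf.
set s := fine (K q S) in KSE.
have s0 : (0 <= s)%R by rewrite -lee_fin KSE.
have s1 : (s <= 1)%R by rewrite -lee_fin KSE.
apply: (le_trans (@PV_le _ _ _ malpha a01 K P V HP mV V1 q)).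
rewrite -/S -KSE -EFinM.
apply: (le_trans (leeD2r _ (HKV q))).
rewrite -EFinD lee_fin.
have vq := V1 q.
have [VM|VM] := leP M (V q).
  have : K q S <= eps%:E.
    apply: ltW; apply: le_lt_trans (HM0 M M0M).
    apply: ereal_sup_ubound; left; exists q => //.
  rewrite -KSE lee_fin => seps.
  nra.
nra.
Unshelve. all: by end_near.
Qed.
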